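(* In the calculus $\lambda^{MD}$, if $\Gamma\vdash M_1:\tau@A$, then there is no infinite sequence $(M_i)_{i\ge1}$ of terms such that $M_i\longrightarrow M_{i+1}$ for all $i\ge1$, where $\longrightarrow$ is full reduction.
   Context: The calculus $\lambda^{MD}$. Fix countably infinite, pairwise disjoint sets of type-level constants ($X$), variables ($x,y,z$), constants ($c$) and stage variables ($\alpha,\beta,\gamma$). A stage ($A,B,C$) is a finite sequence of stage variables, $\varepsilon$ is the empty stage, and juxtaposition ($A\alpha$, $AB$) denotes concatenation. Kinds, types, terms, signatures and type environments are: $K ::= * \mid \Pi x{:}\tau.K$; $\tau,\sigma ::= X \mid \Pi x{:}\tau.\sigma \mid \tau\,M \mid \triangleright_\alpha\tau \mid \forall\alpha.\tau$; $M,N ::= c \mid x \mid \lambda x{:}\tau.M \mid M\,N \mid \blacktriangleright_\alpha M \mid \blacktriangleleft_\alpha M \mid \Lambda\alpha.M \mid M\,A \mid \%_\alpha M$; $\Sigma ::= \emptyset \mid \Sigma, X{::}K \mid \Sigma, c{:}\tau$; $\Gamma ::= \emptyset \mid \Gamma, x{:}\tau@A$. ($\blacktriangleright_\alpha M$ is quotation, $\blacktriangleleft_\alpha M$ escape, $M\,A$ applies a term to a stage, $\%_\alpha M$ is cross-stage persistence, $\triangleright_\alpha\tau$ is a code type.) $\lambda,\Pi$ bind $x$; $\Lambda,\forall$ bind $\alpha$; syntax is identified up to renaming of bound (stage) variables; $\mathrm{FTV}(\cdot)$ is the set of free stage variables. $M[x\mapsto N]$ (and its extension to types, kinds and type environments)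 is capture-avoiding substitution. Stage substitution $[\alpha\mapsto A]$ replaces free occurrences of $\alpha$ in stages by the sequence $A$, acting homomorphically on terms, types, kinds and environments, with $(\blacktriangleright_\beta M)[\alpha\mapsto A]=\blacktriangleright_{\beta[\alpha\mapsto A]}(M[\alpha\mapsto A])$ and likewise for $\blacktriangleleft,\%,\triangleright$, where $\blacktriangleright_{\alpha_1\cdots\alpha_n}M=\blacktriangleright_{\alpha_1}\cdots\blacktriangleright_{\alpha_n}M$, $\triangleright_{\alpha_1\cdots\alpha_n}\tau=\triangleright_{\alpha_1}\cdots\triangleright_{\alpha_n}\tau$, $\blacktriangleleft_{\alpha_1\cdots\alpha_n}M=\blacktriangleleft_{\alpha_n}\cdots\blacktriangleleft_{\alpha_1}M$, $\%_{\alpha_1\cdots\alpha_n}M=\%_{\alpha_n}\cdots\%_{\alpha_1}M$ (just $M$, resp. $\tau$, when $n=0$). Full reduction $\longrightarrow$ is the least relation on terms that is closed under all term-forming constructs (reduction may occur anywhere, including under $\lambda$, $\Lambda$, $\blacktriangleright_\alpha$, $\blacktriangleleft_\alpha$, $\%_\alpha$) and contains $(\lambda x{:}\tau.M)\,N\longrightarrow M[x\mapsto N]$, $\blacktriangleleft_\alpha\blacktriangleright_\alpha M\longrightarrow M$, and $(\Lambda\alpha.M)\,A\longrightarrow M[\alpha\mapsto A]$. Type system. Relative to a fixed signature $\Sigma$, the judgments $\vdash\Sigma$, $\vdash\Gamma$, $\Gamma\vdash K\ \mathrm{kind}@A$, $\Gamma\vdash\tau::K@A$, $\Gamma\vdash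 M:\tau@A$, $\Gamma\vdash K\equiv J@A$, $\Gamma\vdash\tau\equiv\sigma::K@A$, $\Gamma\vdash M\equiv N:\tau@A$ are defined simultaneously by the following rules; signatures and environments are assumed well formed throughout. Well-formedness: $\vdash\emptyset$; from $\vdash\Sigma$, $\emptyset\vdash K\ \mathrm{kind}@\varepsilon$, $X\notin dom(\Sigma)$ infer $\vdash\Sigma,X{::}K$; from $\vdash\Sigma$, $\emptyset\vdash\tau::*@\varepsilon$, $c\notin dom(\Sigma)$ infer $\vdash\Sigma,c{:}\tau$; $\vdash\emptyset$; from $\vdash\Gamma$, $\Gamma\vdash\tau::*@A$, $x$ not declared in $\Gamma$ infer $\vdash\Gamma,x{:}\tau@A$. Kinds: $\Gamma\vdash *\ \mathrm{kind}@A$; if $\Gamma\vdash\tau::*@A$ and $\Gamma,x{:}\tau@A\vdash K\ \mathrm{kind}@A$ then $\Gamma\vdash\Pi x{:}\tau.K\ \mathrm{kind}@A$. Kinding: if $X{::}K\in\Sigma$ then $\Gamma\vdash X::K@A$; if $\Gamma\vdash\tau::*@A$ and $\Gamma,x{:}\tau@A\vdash\sigma::*@A$ then $\Gamma\vdash\Pi x{:}\tau.\sigma::*@A$; if $\Gamma\vdash\sigma::\Pi x{:}\tau.K@A$ and $\Gamma\vdash M:\tau@A$ then $\Gamma\vdash\sigma\,M::K[x\mapsto M]@A$; if $\Gamma\vdash\tau::K@A$ and $\Gamma\vdash K\equiv J@A$ then $\Gamma\vdash\tau::J@A$; if $\Gamma\vdash\tau::*@A\alpha$ then $\Gamma\vdash\triangleright_\alpha\tau::*@A$;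 if $\Gamma\vdash\tau::K@A$ and $\alpha\notin\mathrm{FTV}(\Gamma)\cup\mathrm{FTV}(A)$ then $\Gamma\vdash\forall\alpha.\tau::K@A$; if $\Gamma\vdash\tau::*@A$ then $\Gamma\vdash\tau::*@A\alpha$. Typing: if $c{:}\tau\in\Sigma$ then $\Gamma\vdash c:\tau@A$ (any $A$); if $x{:}\tau@A\in\Gamma$ then $\Gamma\vdash x:\tau@A$; if $\Gamma\vdash\sigma::*@A$ and $\Gamma,x{:}\sigma@A\vdash M:\tau@A$ then $\Gamma\vdash\lambda x{:}\sigma.M:\Pi x{:}\sigma.\tau@A$; if $\Gamma\vdash M:\Pi x{:}\sigma.\tau@A$ and $\Gamma\vdash N:\sigma@A$ then $\Gamma\vdash M\,N:\tau[x\mapsto N]@A$; if $\Gamma\vdash M:\tau@A$ and $\Gamma\vdash\tau\equiv\sigma::K@A$ then $\Gamma\vdash M:\sigma@A$; if $\Gamma\vdash M:\tau@A\alpha$ then $\Gamma\vdash\blacktriangleright_\alpha M:\triangleright_\alpha\tau@A$; if $\Gamma\vdash M:\triangleright_\alpha\tau@A$ then $\Gamma\vdash\blacktriangleleft_\alpha M:\tau@A\alpha$; if $\Gamma\vdash M:\tau@A$ and $\alpha\notin\mathrm{FTV}(\Gamma)\cup\mathrm{FTV}(A)$ then $\Gamma\vdash\Lambda\alpha.M:\forall\alpha.\tau@A$; if $\Gamma\vdash M:\forall\alpha.\tau@A$ then $\Gamma\vdash M\,B:\tau[\alpha\mapsto B]@A$; if $\Gamma\vdash M:\tau@A$ then $\Gamma\vdash\%_\alpha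 M:\tau@A\alpha$. Equivalences: each equivalence judgment is reflexive (on well-formed kinds, kinded types, typed terms), symmetric and transitive. Kinds: $\Gamma\vdash\tau\equiv\sigma::*@A$ and $\Gamma,x{:}\tau@A\vdash K\equiv J@A$ give $\Gamma\vdash\Pi x{:}\tau.K\equiv\Pi x{:}\sigma.J@A$; $\Gamma\vdash K\equiv J@A$ gives $\Gamma\vdash K\equiv J@A\alpha$. Types: $\Gamma\vdash\tau\equiv\sigma::*@A$ and $\Gamma,x{:}\tau@A\vdash\rho\equiv\pi::*@A$ give $\Gamma\vdash\Pi x{:}\tau.\rho\equiv\Pi x{:}\sigma.\pi::*@A$; $\Gamma\vdash\tau\equiv\sigma::\Pi x{:}\rho.K@A$ and $\Gamma\vdash M\equiv N:\rho@A$ give $\Gamma\vdash\tau\,M\equiv\sigma\,N::K[x\mapsto M]@A$; $\Gamma\vdash\tau\equiv\sigma::*@A\alpha$ gives $\Gamma\vdash\triangleright_\alpha\tau\equiv\triangleright_\alpha\sigma::*@A$; $\Gamma\vdash\tau\equiv\sigma::*@A$ with $\alpha\notin\mathrm{FTV}(\Gamma)\cup\mathrm{FTV}(A)$ gives $\Gamma\vdash\forall\alpha.\tau\equiv\forall\alpha.\sigma::*@A$; $\Gamma\vdash\tau\equiv\sigma::*@A$ gives $\Gamma\vdash\tau\equiv\sigma::*@A\alpha$. Terms: congruence rules mirroring the typing rules for $\lambda$ ($\Gamma\vdash\tau\equiv\sigma::*@A$ and $\Gamma,x{:}\tau@A\vdash M\equiv N:\rho@A$ give $\Gamma\vdash\lambda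 x{:}\tau.M\equiv\lambda x{:}\sigma.N:\Pi x{:}\tau.\rho@A$), application, $\blacktriangleright_\alpha$, $\blacktriangleleft_\alpha$, $\Lambda\alpha$ (same side condition), stage application ($\Gamma\vdash M\equiv N:\forall\alpha.\tau@A$ gives $\Gamma\vdash M\,B\equiv N\,B:\tau[\alpha\mapsto B]@A$) and $\%_\alpha$; and the axioms: if $\Gamma,x{:}\sigma@A\vdash M:\tau@A$ and $\Gamma\vdash N:\sigma@A$ then $\Gamma\vdash(\lambda x{:}\sigma.M)\,N\equiv M[x\mapsto N]:\tau[x\mapsto N]@A$; if $\Gamma\vdash M\equiv N:\tau@A$ then $\Gamma\vdash\blacktriangleleft_\alpha\blacktriangleright_\alpha M\equiv N:\tau@A$; if $\Gamma\vdash\Lambda\alpha.M:\forall\alpha.\tau@A$ then $\Gamma\vdash(\Lambda\alpha.M)\,\varepsilon\equiv M[\alpha\mapsto\varepsilon]:\tau[\alpha\mapsto\varepsilon]@A$; if $\Gamma\vdash M:\tau@A\alpha$ and $\Gamma\vdash M:\tau@A$ then $\Gamma\vdash\%_\alpha M\equiv M:\tau@A\alpha$. *)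

(* Defs.v *)
(* The calculus lambda^MD, de Bruijn presentation.
   - term variables: de Bruijn indices (0 = innermost lambda/Pi binder);
   - stage variables: de Bruijn indices (0 = innermost Lambda/forall binder);
     indices escaping all binders play the role of the free (global) stage
     variables of the named presentation. *)
From Stdlib Require Import List Arith Bool.
Local Open Scope bool_scope.
Import ListNotations.

Definition stage := list nat.

Inductive ty : Type :=
| TConst (X : nat)
| TPi (t1 t2 : ty)
| TApp (t : ty) (M : tm)
| TCode (a : nat) (t : ty)
| TAll (t : ty)
with tm : Type :=
| Const (c : nat)
| Var (n : nat)
| Lam (t : ty) (M : tm)
| App (M N : tm)
| Quote (a : nat) (M : tm)
| Esc (a : nat) (M : tm)
| SLam (M : tm)
| SApp (M : tm) (A : stage)
| Csp (a : nat) (M : tm).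

Inductive kind : Type :=
| KStar
| KPi (t : ty) (K : kind).

Definition sup (s : nat -> stage) : nat -> stage :=
  fun j => match j with 0 => [0] | S j => map S (s j) end.

Definition codes (l : stage) (t : ty) : ty := fold_right TCode t l.
Definition quotes (l : stage) (M : tm) : tm := fold_right Quote M l.
(* <|_{a1...an} M = <|_an ... <|_a1 M ; likewise for % *)
Definition escs (l : stage) (M : tm) : tm := fold_left (fun acc a => Esc a acc) l M.
Definition csps (l : stage) (M : tm) : tm := fold_left (fun acc a => Csp a acc) l M.

Definition ssub_stage (s : nat -> stage) (A : stage) : stage := flat_map s A.

Fixpoint ssub_ty (s : nat -> stage) (t : ty) {struct t} : ty :=
  match t with
  | TConst X => TConst X
  | TPi t1 t2 => TPi (ssub_ty s t1) (ssub_ty s t2)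
  | TApp t M => TApp (ssub_ty s t) (ssub_tm s M)
  | TCode a t => codes (s a) (ssub_ty s t)
  | TAll t => TAll (ssub_ty (sup s) t)
  end
with ssub_tm (s : nat -> stage) (M : tm) {struct M} : tm :=
  match M with
  | Const c => Const c
  | Var n => Var n
  | Lam t M => Lam (ssub_ty s t) (ssub_tm s M)
  | App M N => App (ssub_tm s M) (ssub_tm s N)
  | Quote a M => quotes (s a) (ssub_tm s M)
  | Esc a M => escs (s a) (ssub_tm s M)
  | SLam M => SLam (ssub_tm (sup s) M)
  | SApp M A => SApp (ssub_tm s M) (ssub_stage s A)
  | Csp a M => csps (s a) (ssub_tm s M)
  end.

Definition sopen_sub (B : stage) : nat -> stage :=
  fun j => match j with 0 => B | S j => [j] end.
Definition sopen_ty (t : ty) (B : stage) : ty := ssub_ty (sopen_sub B) t.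
Definition sopen_tm (M : tm) (B : stage) : tm := ssub_tm (sopen_sub B) M.

(* abstraction of the (free) stage variable i: builds the body of
   forall i. t  /  Lambda i. M  from t / M *)
Definition sclose_sub (i : nat) : nat -> stage :=
  fun j => if Nat.eqb j i then [0] else [S j].
Definition sclose_ty (i : nat) (t : ty) : ty := ssub_ty (sclose_sub i) t.
Definition sclose_tm (i : nat) (M : tm) : tm := ssub_tm (sclose_sub i) M.

Definition sfv_stage (i : nat) (A : stage) : bool := existsb (Nat.eqb i) A.

Fixpoint sfv_ty (i : nat) (t : ty) {struct t} : bool :=
  match t with
  | TConst _ => false
  | TPi t1 t2 => sfv_ty i t1 || sfv_ty i t2
  | TApp t M => sfv_ty i t || sfv_tm i M
  | TCode a t => Nat.eqb i a || sfv_ty i t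
  | TAll t => sfv_ty (S i) t
  end
with sfv_tm (i : nat) (M : tm) {struct M} : bool :=
  match M with
  | Const _ => false
  | Var _ => false
  | Lam t M => sfv_ty i t || sfv_tm i M
  | App M N => sfv_tm i M || sfv_tm i N
  | Quote a M | Esc a M | Csp a M => Nat.eqb i a || sfv_tm i M
  | SLam M => sfv_tm (S i) M
  | SApp M A => sfv_tm i M || sfv_stage i A
  end.

Definition upr (r : nat -> nat) : nat -> nat :=
  fun n => match n with 0 => 0 | S n => S (r n) end.

Fixpoint ren_ty (r : nat -> nat) (t : ty) {struct t} : ty :=
  match t with
  | TConst X => TConst X
  | TPi t1 t2 => TPi (ren_ty r t1) (ren_ty (upr r) t2)
  | TApp t M => TApp (ren_ty r t) (ren_tm r M)
  | TCode a t => TCode a (ren_ty r t)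
  | TAll t => TAll (ren_ty r t)
  end
with ren_tm (r : nat -> nat) (M : tm) {struct M} : tm :=
  match M with
  | Const c => Const c
  | Var n => Var (r n)
  | Lam t M => Lam (ren_ty r t) (ren_tm (upr r) M)
  | App M N => App (ren_tm r M) (ren_tm r N)
  | Quote a M => Quote a (ren_tm r M)
  | Esc a M => Esc a (ren_tm r M)
  | SLam M => SLam (ren_tm r M)
  | SApp M A => SApp (ren_tm r M) A
  | Csp a M => Csp a (ren_tm r M)
  end.

Definition tup (s : nat -> tm) : nat -> tm :=
  fun n => match n with 0 => Var 0 | S n => ren_tm S (s n) end.
(* lifting a term substitution under a stage binder *)
Definition tsup (s : nat -> tm) : nat -> tm :=
  fun n => ssub_tm (fun j => [S j]) (s n).

Fixpoint tsub_ty (s : nat -> tm) (t : ty) {struct t} : ty :=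
  match t with
  | TConst X => TConst X
  | TPi t1 t2 => TPi (tsub_ty s t1) (tsub_ty (tup s) t2)
  | TApp t M => TApp (tsub_ty s t) (tsub_tm s M)
  | TCode a t => TCode a (tsub_ty s t)
  | TAll t => TAll (tsub_ty (tsup s) t)
  end
with tsub_tm (s : nat -> tm) (M : tm) {struct M} : tm :=
  match M with
  | Const c => Const c
  | Var n => s n
  | Lam t M => Lam (tsub_ty s t) (tsub_tm (tup s) M)
  | App M N => App (tsub_tm s M) (tsub_tm s N)
  | Quote a M => Quote a (tsub_tm s M)
  | Esc a M => Esc a (tsub_tm s M)
  | SLam M => SLam (tsub_tm (tsup s) M)
  | SApp M A => SApp (tsub_tm s M) A
  | Csp a M => Csp a (tsub_tm s M)
  end.

Fixpoint tsub_kind (s : nat -> tm) (K : kind) : kind :=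
  match K with
  | KStar => KStar
  | KPi t K => KPi (tsub_ty s t) (tsub_kind (tup s) K)
  end.

Definition topen_sub (N : tm) : nat -> tm :=
  fun n => match n with 0 => N | S n => Var n end.
Definition topen_ty (t : ty) (N : tm) : ty := tsub_ty (topen_sub N) t.
Definition topen_tm (M : tm) (N : tm) : tm := tsub_tm (topen_sub N) M.
Definition topen_kind (K : kind) (N : tm) : kind := tsub_kind (topen_sub N) K.

Inductive red : tm -> tm -> Prop :=
| red_beta t M N : red (App (Lam t M) N) (topen_tm M N)
| red_esc a M : red (Esc a (Quote a M)) M
| red_sbeta M A : red (SApp (SLam M) A) (sopen_tm M A)
| red_lam t M M' : red M M' -> red (Lam t M) (Lam t M')
| red_appl M M' N : red M M' -> red (App M N) (App M' N)
| red_appr M N N' : red N N' -> red (App M N) (App M N')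
| red_quote a M M' : red M M' -> red (Quote a M) (Quote a M')
| red_escc a M M' : red M M' -> red (Esc a M) (Esc a M')
| red_slam M M' : red M M' -> red (SLam M) (SLam M')
| red_sapp M M' A : red M M' -> red (SApp M A) (SApp M' A)
| red_csp a M M' : red M M' -> red (Csp a M) (Csp a M').

Inductive decl : Type :=
| DType (X : nat) (K : kind)
| DConst (c : nat) (t : ty).
Definition sig := list decl.

(* environment: head = most recently declared variable (de Bruijn index 0);
   an entry (t, A) is x : t @ A, with t relative to the entries after it *)
Definition env := list (ty * stage).

Definition sfv_env (i : nat) (G : env) : bool :=
  existsb (fun p => sfv_ty i (fst p) || sfv_stage i (snd p)) G.

Definition sfresh (i : nat) (G : env) (A : stage) : Prop :=
  sfv_env i G = false /\ sfv_stage i A = false.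

Section Judgments.
Variable Sg : sig.

Inductive wf_env : env -> Prop :=
| wfe_nil : wf_env []
| wfe_cons G t A : wf_env G -> has_kind G t KStar A -> wf_env ((t, A) :: G)

with wf_kind : env -> kind -> stage -> Prop :=
| wk_star G A : wf_env G -> wf_kind G KStar A
| wk_pi G t K A : has_kind G t KStar A -> wf_kind ((t, A) :: G) K A ->
    wf_kind G (KPi t K) A

with has_kind : env -> ty -> kind -> stage -> Prop :=
| hk_const G X K A : wf_env G -> In (DType X K) Sg -> has_kind G (TConst X) K A
| hk_pi G t s A : has_kind G t KStar A -> has_kind ((t, A) :: G) s KStar A ->
    has_kind G (TPi t s) KStar A
| hk_app G s t K M A : has_kind G s (KPi t K) A -> has_type G M t A ->
    has_kind G (TApp s M) (topen_kind K M) A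
| hk_conv G t K J A : has_kind G t K A -> eq_kind G K J A -> has_kind G t J A
| hk_code G t A a : has_kind G t KStar (A ++ [a]) -> has_kind G (TCode a t) KStar A
| hk_all G t K A i : has_kind G t K A -> sfresh i G A ->
    has_kind G (TAll (sclose_ty i t)) K A
| hk_weak G t A a : has_kind G t KStar A -> has_kind G t KStar (A ++ [a])

with has_type : env -> tm -> ty -> stage -> Prop :=
| ht_const G c t A : wf_env G -> In (DConst c t) Sg -> has_type G (Const c) t A
| ht_var G n t A : wf_env G -> nth_error G n = Some (t, A) ->
    has_type G (Var n) (ren_ty (fun k => S n + k) t) A
| ht_lam G s M t A : has_kind G s KStar A -> has_type ((s, A) :: G) M t A ->
    has_type G (Lam s M) (TPi s t) A
| ht_app G M N s t A : has_type G M (TPi s t) A -> has_type G N s A ->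
    has_type G (App M N) (topen_ty t N) A
| ht_conv G M t s K A : has_type G M t A -> eq_ty G t s K A -> has_type G M s A
| ht_quote G M t A a : has_type G M t (A ++ [a]) ->
    has_type G (Quote a M) (TCode a t) A
| ht_esc G M t A a : has_type G M (TCode a t) A ->
    has_type G (Esc a M) t (A ++ [a])
| ht_slam G M t A i : has_type G M t A -> sfresh i G A ->
    has_type G (SLam (sclose_tm i M)) (TAll (sclose_ty i t)) A
| ht_sapp G M t A B : has_type G M (TAll t) A ->
    has_type G (SApp M B) (sopen_ty t B) A
| ht_csp G M t A a : has_type G M t A -> has_type G (Csp a M) t (A ++ [a])

with eq_kind : env -> kind -> kind -> stage -> Prop :=
| ek_refl G K A : wf_kind G K A -> eq_kind G K K A
| ek_sym G K J A : eq_kind G K J A -> eq_kind G J K A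
| ek_trans G K J L A : eq_kind G K J A -> eq_kind G J L A -> eq_kind G K L A
| ek_pi G t s K J A : eq_ty G t s KStar A -> eq_kind ((t, A) :: G) K J A ->
    eq_kind G (KPi t K) (KPi s J) A
| ek_weak G K J A a : eq_kind G K J A -> eq_kind G K J (A ++ [a])

with eq_ty : env -> ty -> ty -> kind -> stage -> Prop :=
| et_refl G t K A : has_kind G t K A -> eq_ty G t t K A
| et_sym G t s K A : eq_ty G t s K A -> eq_ty G s t K A
| et_trans G t s r K A : eq_ty G t s K A -> eq_ty G s r K A -> eq_ty G t r K A
| et_pi G t s r p A : eq_ty G t s KStar A -> eq_ty ((t, A) :: G) r p KStar A ->
    eq_ty G (TPi t r) (TPi s p) KStar A
| et_app G t s r K M N A : eq_ty G t s (KPi r K) A -> eq_tm G M N r A ->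
    eq_ty G (TApp t M) (TApp s N) (topen_kind K M) A
| et_code G t s A a : eq_ty G t s KStar (A ++ [a]) ->
    eq_ty G (TCode a t) (TCode a s) KStar A
| et_all G t s A i : eq_ty G t s KStar A -> sfresh i G A ->
    eq_ty G (TAll (sclose_ty i t)) (TAll (sclose_ty i s)) KStar A
| et_weak G t s A a : eq_ty G t s KStar A -> eq_ty G t s KStar (A ++ [a])

with eq_tm : env -> tm -> tm -> ty -> stage -> Prop :=
| eq_refl G M t A : has_type G M t A -> eq_tm G M M t A
| eq_sym G M N t A : eq_tm G M N t A -> eq_tm G N M t A
| eq_trans G M N P t A : eq_tm G M N t A -> eq_tm G N P t A -> eq_tm G M P t A
| eq_lam G t s M N r A : eq_ty G t s KStar A -> eq_tm ((t, A) :: G) M N r A ->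
    eq_tm G (Lam t M) (Lam s N) (TPi t r) A
| eq_app G M M' N N' s t A : eq_tm G M M' (TPi s t) A -> eq_tm G N N' s A ->
    eq_tm G (App M N) (App M' N') (topen_ty t N) A
| eq_quote G M N t A a : eq_tm G M N t (A ++ [a]) ->
    eq_tm G (Quote a M) (Quote a N) (TCode a t) A
| eq_esc G M N t A a : eq_tm G M N (TCode a t) A ->
    eq_tm G (Esc a M) (Esc a N) t (A ++ [a])
| eq_slam G M N t A i : eq_tm G M N t A -> sfresh i G A ->
    eq_tm G (SLam (sclose_tm i M)) (SLam (sclose_tm i N)) (TAll (sclose_ty i t)) A
| eq_sapp G M N t A B : eq_tm G M N (TAll t) A ->
    eq_tm G (SApp M B) (SApp N B) (sopen_ty t B) A
| eq_csp G M N t A a : eq_tm G M N t A ->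
    eq_tm G (Csp a M) (Csp a N) t (A ++ [a])
| eq_beta G s M t N A : has_type ((s, A) :: G) M t A -> has_type G N s A ->
    eq_tm G (App (Lam s M) N) (topen_tm M N) (topen_ty t N) A
| eq_escquote G M N t A a : eq_tm G M N t A ->
    eq_tm G (Esc a (Quote a M)) N t A
| eq_sbeta G M t A : has_type G (SLam M) (TAll t) A ->
    eq_tm G (SApp (SLam M) []) (sopen_tm M []) (sopen_ty t []) A
| eq_cspelim G M t A a : has_type G M t (A ++ [a]) -> has_type G M t A ->
    eq_tm G (Csp a M) M t (A ++ [a]).

End Judgments.

Inductive wf_sig : sig -> Prop :=
| ws_nil : wf_sig []
| ws_type Sg X K : wf_sig Sg -> wf_kind Sg [] K [] ->
    (forall K', ~ In (DType X K') Sg) -> wf_sig (DType X K :: Sg)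
| ws_const Sg c t : wf_sig Sg -> has_kind Sg [] t KStar [] ->
    (forall t', ~ In (DConst c t') Sg) -> wf_sig (DConst c t :: Sg).

(* Main.v *)
Require Import Defs.
From Stdlib Require Import List Arith Lia Wf_nat.
Import ListNotations.

Inductive lty := lo | larr (a b : lty).
Inductive ltm := lVar (n : nat) | lCst | lLam (M : ltm) | lApp (M N : ltm).

Fixpoint lren (r : nat -> nat) (M : ltm) : ltm :=
  match M with
  | lVar n => lVar (r n) | lCst => lCst
  | lLam M => lLam (lren (upr r) M) | lApp M N => lApp (lren r M) (lren r N)
  end.
Definition lup (s : nat -> ltm) : nat -> ltm :=
  fun n => match n with 0 => lVar 0 | S n => lren S (s n) end.
Fixpoint lsub (s : nat -> ltm) (M : ltm) : ltm :=
  match M with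
  | lVar n => s n | lCst => lCst
  | lLam M => lLam (lsub (lup s) M) | lApp M N => lApp (lsub s M) (lsub s N)
  end.
Definition lopen (N : ltm) : nat -> ltm :=
  fun n => match n with 0 => N | S n => lVar n end.

Lemma lren_ext : forall M r r', (forall n, r n = r' n) -> lren r M = lren r' M.
Proof.
  induction M; intros r r' H; simpl; f_equal; auto.
  apply IHM; intros [|n]; simpl; auto.
Qed.
Lemma lsub_ext : forall M s s', (forall n, s n = s' n) -> lsub s M = lsub s' M.
Proof.
  induction M; intros s s' H; simpl; f_equal; auto.
  apply IHM; intros [|n]; simpl; auto. rewrite H; auto.
Qed.
Lemma lren_ren : forall M r1 r2, lren r1 (lren r2 M) = lren (fun n => r1 (r2 n)) M.
Proof.
  induction M; intros; simpl; f_equal; auto.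
  rewrite IHM. apply lren_ext; intros [|n]; simpl; auto.
Qed.
Lemma lsub_ren : forall M s r, lsub s (lren r M) = lsub (fun n => s (r n)) M.
Proof.
  induction M; intros; simpl; f_equal; auto.
  rewrite IHM. apply lsub_ext; intros [|n]; simpl; auto.
Qed.
Lemma lren_sub : forall M s r, lren r (lsub s M) = lsub (fun n => lren r (s n)) M.
Proof.
  induction M; intros; simpl; f_equal; auto.
  rewrite IHM. apply lsub_ext; intros [|n]; simpl; auto.
  rewrite !lren_ren. apply lren_ext; intros; reflexivity.
Qed.
Lemma lsub_sub : forall M s t, lsub t (lsub s M) = lsub (fun n => lsub t (s n)) M.
Proof.
  induction M; intros; simpl; f_equal; auto.
  rewrite IHM. apply lsub_ext; intros [|n]; simpl; auto.
  rewrite lsub_ren, lren_sub. apply lsub_ext; intros; reflexivity.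
Qed.
Lemma lsub_id : forall M, lsub lVar M = M.
Proof.
  induction M; simpl; f_equal; auto.
  rewrite <- IHM at 2. apply lsub_ext; intros [|n]; reflexivity.
Qed.

Inductive lstep : ltm -> ltm -> Prop :=
| ls_beta M N : lstep (lApp (lLam M) N) (lsub (lopen N) M)
| ls_lam M M' : lstep M M' -> lstep (lLam M) (lLam M')
| ls_appl M M' N : lstep M M' -> lstep (lApp M N) (lApp M' N)
| ls_appr M N N' : lstep N N' -> lstep (lApp M N) (lApp M N').

Lemma lopen_sub : forall s N M,
  lsub s (lsub (lopen N) M) = lsub (lopen (lsub s N)) (lsub (lup s) M).
Proof.
  intros. rewrite !lsub_sub. apply lsub_ext; intros [|n]; simpl; auto.
  rewrite lsub_ren. simpl. rewrite lsub_id. reflexivity.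
Qed.

Lemma lstep_sub : forall M M', lstep M M' -> forall s, lstep (lsub s M) (lsub s M').
Proof.
  induction 1; intros s; simpl.
  - rewrite lopen_sub. constructor.
  - constructor; auto.
  - constructor; auto.
  - constructor; auto.
Qed.

Inductive lty_of : list lty -> ltm -> lty -> Prop :=
| lt_var G n T : nth_error G n = Some T -> lty_of G (lVar n) T
| lt_cst G T : lty_of G lCst T
| lt_lam G M S T : lty_of (S :: G) M T -> lty_of G (lLam M) (larr S T)
| lt_app G M N S T : lty_of G M (larr S T) -> lty_of G N S -> lty_of G (lApp M N) T.

Definition SN := Acc (fun y x => lstep x y).

Lemma SN_step : forall M M', SN M -> lstep M M' -> SN M'.
Proof. intros M M' H st. destruct H. apply H; auto. Qed.

Lemma SN_appl : forall P, SN P -> forall M N, P = lApp M N -> SN M.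
Proof.
  induction 1 as [P _ IH]; intros M N ->. constructor; intros M' st.
  eapply IH; [apply ls_appl; eauto | reflexivity].
Qed.

Lemma SN_sub_inv : forall s P, SN P -> forall M, P = lsub s M -> SN M.
Proof.
  intros s P H; induction H as [P _ IH]; intros M ->. constructor; intros M' st.
  eapply IH; [apply lstep_sub; eauto | reflexivity].
Qed.

Fixpoint Red (T : lty) (M : ltm) : Prop :=
  match T with
  | lo => SN M
  | larr U T => forall N, Red U N -> Red T (lApp M N)
  end.

Definition neutral (M : ltm) : Prop := match M with lLam _ => False | _ => True end.

Lemma CR : forall T,
  (forall M, Red T M -> SN M) /\
  (forall M M', Red T M -> lstep M M' -> Red T M') /\
  (forall M, neutral M -> (forall M', lstep M M' -> Red T M') -> Red T M).
Proof.
  induction T as [|U [S1 [S2 S3]] T [T1 [T2 T3]]].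
  - simpl; split; [|split].
    + auto.
    + intros; eapply SN_step; eauto.
    + intros; constructor; auto.
  - assert (Hv : Red U (lVar 0)).
    { apply S3; simpl; auto. intros M' st; inversion st. }
    split; [|split].
    + intros M H. eapply SN_appl; [apply T1, H, Hv | reflexivity].
    + intros M M' H st N HN. eapply T2; [apply H, HN | apply ls_appl; auto].
    + intros M neu H N HN. assert (SN N) as HS by (apply S1; auto).
      revert HN. induction HS as [N _ IHN]; intros HN.
      apply T3; simpl; auto. intros P st. inversion st; subst.
      * simpl in neu; contradiction.
      * apply H; auto.
      * apply IHN; auto. eapply S2; eauto.
Qed.

Lemma lam_aux U T : forall M, SN M -> forall N, SN N ->
  (forall N, Red U N -> Red T (lsub (lopen N) M)) -> Red U N -> Red T (lApp (lLam M) N).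
Proof.
  induction 1 as [M _ IHM]. induction 1 as [N HSN IHN]. intros H HN.
  apply (proj2 (proj2 (CR T))); simpl; auto. intros P st. inversion st; subst.
  - apply H; auto.
  - inversion H3; subst. apply IHM; auto.
    + constructor; auto.
    + intros N0 HN0. eapply (proj1 (proj2 (CR T))); [apply H, HN0|]. apply lstep_sub; auto.
  - apply IHN; auto. eapply (proj1 (proj2 (CR U))); eauto.
Qed.

Lemma Red_lam U T M : (forall N, Red U N -> Red T (lsub (lopen N) M)) -> Red (larr U T) (lLam M).
Proof.
  intros H N HN. apply (lam_aux U T); auto.
  - assert (Hv : Red U (lVar 0)).
    { apply (proj2 (proj2 (CR U))); simpl; auto. intros M' st; inversion st. }
    eapply SN_sub_inv; [apply (proj1 (CR T)), H, Hv | reflexivity].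
  - apply (proj1 (CR U)); auto.
Qed.

Lemma fundamental : forall G M T, lty_of G M T ->
  forall s, (forall n U, nth_error G n = Some U -> Red U (s n)) -> Red T (lsub s M).
Proof.
  induction 1; intros s Hs; simpl.
  - apply Hs; auto.
  - apply (proj2 (proj2 (CR T))); simpl; auto. intros M' st; inversion st.
  - apply Red_lam. intros N HN. rewrite lsub_sub.
    replace (lsub (fun n => lsub (lopen N) (lup s n)) M)
      with (lsub (fun n => match n with 0 => N | S n => s n end) M).
    + apply IHlty_of. intros [|n] U E; simpl in E.
      * inversion E; subst; auto.
      * apply Hs; auto.
    + apply lsub_ext; intros [|n]; simpl; auto.
      rewrite lsub_ren; simpl; rewrite lsub_id; auto.
  - apply (IHlty_of1 s Hs). apply IHlty_of2; auto.
Qed.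

Lemma typed_SN : forall G M T, lty_of G M T -> SN M.
Proof.
  intros G M T H. rewrite <- lsub_id.
  apply (proj1 (CR T)). apply (fundamental G M T H).
  intros n U _. apply (proj2 (proj2 (CR U))); simpl; auto. intros M' st; inversion st.
Qed.

Fixpoint ety (t : ty) : lty :=
  match t with
  | TConst _ => lo
  | TPi a b => larr (ety a) (ety b)
  | TApp t _ => ety t
  | TCode _ t => ety t
  | TAll t => ety t
  end.

Fixpoint erase (M : tm) : ltm :=
  match M with
  | Const _ => lCst
  | Var n => lVar n
  | Lam _ M => lLam (erase M)
  | App M N => lApp (erase M) (erase N)
  | Quote _ M | Esc _ M | Csp _ M | SLam M | SApp M _ => erase M
  end.

Fixpoint nslam (M : tm) : nat :=
  match M with
  | Const _ | Var _ => 0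
  | Lam _ M => nslam M
  | App M N => nslam M + nslam N
  | Quote _ M | Esc _ M | Csp _ M | SApp M _ => nslam M
  | SLam M => S (nslam M)
  end.

Fixpoint tsize (M : tm) : nat :=
  match M with
  | Const _ | Var _ => 1
  | Lam _ M => S (tsize M)
  | App M N => S (tsize M + tsize N)
  | Quote _ M | Esc _ M | Csp _ M | SApp M _ | SLam M => S (tsize M)
  end.

Lemma ety_codes : forall l t, ety (codes l t) = ety t.
Proof. induction l; simpl; auto. Qed.

Lemma ety_ssub : forall t s, ety (ssub_ty s t) = ety t.
Proof.
  induction t; intros; simpl; auto.
  - rewrite IHt1, IHt2; auto.
  - rewrite ety_codes; auto.
Qed.
Lemma ety_ren : forall t r, ety (ren_ty r t) = ety t.
Proof. induction t; intros; simpl; auto. rewrite IHt1, IHt2; auto. Qed.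
Lemma ety_tsub : forall t s, ety (tsub_ty s t) = ety t.
Proof. induction t; intros; simpl; auto. rewrite IHt1, IHt2; auto. Qed.

Lemma erase_quotes : forall l M, erase (quotes l M) = erase M.
Proof. induction l; simpl; auto. Qed.
Lemma erase_escs : forall l M, erase (escs l M) = erase M.
Proof. induction l; intros; simpl; auto. rewrite IHl; auto. Qed.
Lemma erase_csps : forall l M, erase (csps l M) = erase M.
Proof. induction l; intros; simpl; auto. rewrite IHl; auto. Qed.
Lemma nslam_quotes : forall l M, nslam (quotes l M) = nslam M.
Proof. induction l; simpl; auto. Qed.
Lemma nslam_escs : forall l M, nslam (escs l M) = nslam M.
Proof. induction l; intros; simpl; auto. rewrite IHl; auto. Qed.
Lemma nslam_csps : forall l M, nslam (csps l M) = nslam M.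
Proof. induction l; intros; simpl; auto. rewrite IHl; auto. Qed.

Lemma erase_ssub : forall M s, erase (ssub_tm s M) = erase M.
Proof.
  induction M; intros; simpl; auto; try (rewrite ?IHM, ?IHM1, ?IHM2; auto).
  - rewrite erase_quotes; auto.
  - rewrite erase_escs; auto.
  - rewrite erase_csps; auto.
Qed.
Lemma nslam_ssub : forall M s, nslam (ssub_tm s M) = nslam M.
Proof.
  induction M; intros; simpl; auto; try (rewrite ?IHM, ?IHM1, ?IHM2; auto).
  - rewrite nslam_quotes; auto.
  - rewrite nslam_escs; auto.
  - rewrite nslam_csps; auto.
Qed.
Lemma erase_ren : forall M r, erase (ren_tm r M) = lren r (erase M).
Proof. induction M; intros; simpl; auto; rewrite ?IHM, ?IHM1, ?IHM2; auto. Qed.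
Lemma erase_tsub : forall M s, erase (tsub_tm s M) = lsub (fun n => erase (s n)) (erase M).
Proof.
  induction M; intros; simpl; auto; rewrite ?IHM, ?IHM1, ?IHM2; auto.
  - f_equal. apply lsub_ext; intros [|n]; simpl; auto. apply erase_ren.
  - apply lsub_ext; intros n; unfold tsup. apply erase_ssub.
Qed.

Definition lexlt (p q : nat * nat) : Prop :=
  fst p < fst q \/ (fst p = fst q /\ snd p < snd q).

Lemma classify : forall M M', red M M' ->
  lstep (erase M) (erase M') \/
  (erase M = erase M' /\ lexlt (nslam M', tsize M') (nslam M, tsize M)).
Proof.
  unfold lexlt; induction 1; simpl.
  - left. unfold topen_tm. rewrite erase_tsub.
    replace (lsub (fun n => erase (topen_sub N n)) (erase M)) with (lsub (lopen (erase N)) (erase M)).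
    + constructor.
    + apply lsub_ext; intros [|n]; reflexivity.
  - right. split; [reflexivity | simpl; lia].
  - right. unfold sopen_tm. rewrite erase_ssub, nslam_ssub. split; [reflexivity | simpl; lia].
  - destruct IHred as [H1|[H1 H2]]; [left; constructor; auto | right; rewrite H1; simpl in *; split; auto; lia].
  - destruct IHred as [H1|[H1 H2]]; [left; constructor; auto | right; rewrite H1; simpl in *; split; auto; lia].
  - destruct IHred as [H1|[H1 H2]]; [left; constructor; auto | right; rewrite H1; simpl in *; split; auto; lia].
  - destruct IHred as [H1|[H1 H2]]; [left; auto | right; rewrite H1; simpl in *; split; auto; lia].
  - destruct IHred as [H1|[H1 H2]]; [left; auto | right; rewrite H1; simpl in *; split; auto; lia].
  - destruct IHred as [H1|[H1 H2]]; [left; auto | right; rewrite H1; simpl in *; split; auto; lia].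
  - destruct IHred as [H1|[H1 H2]]; [left; auto | right; rewrite H1; simpl in *; split; auto; lia].
  - destruct IHred as [H1|[H1 H2]]; [left; auto | right; rewrite H1; simpl in *; split; auto; lia].
Qed.

Lemma no_chain : forall e, SN e -> forall f, erase (f 0) = e ->
  (forall i, red (f i) (f (S i))) -> False.
Proof.
  induction 1 as [e _ IHe].
  assert (forall a b f, nslam (f 0) = a -> tsize (f 0) = b -> erase (f 0) = e ->
            (forall i, red (f i) (f (S i))) -> False) as K.
  { intro a. induction a as [a IHa] using lt_wf_ind.
    intro b. induction b as [b IHb] using lt_wf_ind.
    intros f Ha Hb He Hc.
    destruct (classify _ _ (Hc 0)) as [H|[H1 [H2|[H2 H3]]]]; simpl in *.
    - apply (IHe (erase (f 1))) with (f := fun i => f (S i)).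
      + rewrite <- He; exact H.
      + reflexivity.
      + intro i; apply (Hc (S i)).
    - apply (IHa (nslam (f 1))) with (b := tsize (f 1)) (f := fun i => f (S i)).
      + lia.
      + reflexivity.
      + reflexivity.
      + simpl; congruence.
      + intro i; apply (Hc (S i)).
    - apply (IHb (tsize (f 1))) with (f := fun i => f (S i)).
      + lia.
      + simpl; congruence.
      + reflexivity.
      + simpl; congruence.
      + intro i; apply (Hc (S i)). }
  intros f He Hc. eapply K; eauto.
Qed.

Scheme wf_env_mut := Induction for wf_env Sort Prop
with wf_kind_mut := Induction for wf_kind Sort Prop
with has_kind_mut := Induction for has_kind Sort Prop
with has_type_mut := Induction for has_type Sort Prop
with eq_kind_mut := Induction for eq_kind Sort Prop
with eq_ty_mut := Induction for eq_ty Sort Prop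
with eq_tm_mut := Induction for eq_tm Sort Prop.

Definition ectx (G : env) : list lty := map (fun p => ety (fst p)) G.

Lemma erase_typed : forall Sg G M t A, has_type Sg G M t A ->
  lty_of (ectx G) (erase M) (ety t).
Proof.
  intros Sg.
  apply (has_type_mut Sg (fun _ _ => True) (fun _ _ _ _ => True) (fun _ _ _ _ _ => True)
    (fun G M t A _ => lty_of (ectx G) (erase M) (ety t))
    (fun _ _ _ _ _ => True)
    (fun G t s K A _ => ety t = ety s)
    (fun _ _ _ _ _ _ => True));
  intros; unfold sclose_ty, sclose_tm, sopen_ty, topen_ty in *; simpl in *; auto;
  rewrite ?ety_ssub, ?ety_ren, ?ety_tsub, ?erase_ssub in *; try congruence.
  - constructor.
  - constructor. unfold ectx. rewrite nth_error_map; match goal with E : nth_error _ _ = _ |- _ => rewrite E end; reflexivity.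
  - constructor; auto.
  - econstructor; eauto.
Qed.

Theorem theorem2 (Sg : sig) (G : env) (M1 : tm) (t : ty) (A : stage) :
  wf_sig Sg -> has_type Sg G M1 t A ->
  ~ (exists f : nat -> tm, f 0 = M1 /\ forall i : nat, red (f i) (f (S i))).
Proof.
  intros _ H [f [H0 Hc]].
  apply (no_chain (erase M1) (typed_SN _ _ _ (erase_typed _ _ _ _ _ H)) f); auto.
  rewrite H0; auto.
Qed.
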